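(* Let $A$ be an algebra over a field $K$, let $A_1$ be a linear subspace with $A=A_1\oplus A_0$, and for a map $T:A\to A$ write $T=T_1+T_0$ where $T_1(A)\subseteq A_1$ and $T_0(A)\subseteq A_0$ (the components of $T$ with respect to this direct sum). Then: (i) $T$ is a weak multiplier if and only if $T_1$ is a weak multiplier; and if $T$ is a weak multiplier, then $T_1$ is $K$-linear and $T_1(A_0)=\{0\}$. (ii) If $T_1$ is a multiplier and $T_0(xy)=0$ for all $x,y\in A$, then $T$ is a multiplier. If moreover $A_1$ is a subalgebra of $A$, the converse holds: if $T$ is a multiplier then $T_1$ is a multiplier and $T_0(xy)=0$ for all $x,y\in A$. (iii) Suppose $A_1$ is a subalgebra of $A$. Let $\pi:A\to A_1$ be the projection along $A_0$ and $\mu:A_1\to A$ the inclusion, and define $\Phi:(A_1)^{A_1}\to A^A$ by $\Phi(R)=\mu\circ R\circ\pi$. Then $\Phi$ restricts to an algebra isomorphism from $M(A_1)$ onto $M_1(A)$, and to a bijective linear map from $M'(A_1)$ onto $M'_1(A)$ preserving the Jordan product $S\circ U=SU+US$ (a Jordan isomorphism).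
   Context: An algebra over $K$ is a $K$-vector space with a bilinear, not necessarily associative multiplication. A map $T:A\to A$ (not assumed linear) is a weak multiplier if $xT(y)=T(x)y$ for all $x,y\in A$, and a multiplier if $xT(y)=T(xy)=T(x)y$ for all $x,y\in A$. $M(B)$, $M'(B)$ denote the sets of multipliers and weak multipliers of an algebra $B$. $A_0=\mathrm{Ann}_l(A)\cap\mathrm{Ann}_r(A)$ with $\mathrm{Ann}_l(A)=\{a: ax=0\ \forall x\}$, $\mathrm{Ann}_r(A)=\{a: xa=0\ \forall x\}$. Given the decomposition $A=A_1\oplus A_0$, $M_1(A)$ (resp. $M'_1(A)$) is the set of multipliers (resp. weak multipliers) $T$ of $A$ with $T(A)\subseteq A_1$. *)

(* Defs.v *)
From HB Require Import structures.
From mathcomp Require Import all_boot all_order all_algebra.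
Set Implicit Arguments. Unset Strict Implicit. Unset Printing Implicit Defensive.
Import Order.TTheory GRing.Theory Num.Theory.
Local Open Scope ring_scope.

Definition bilinear_mul (K : fieldType) (V : lmodType K) (mul : V -> V -> V) : Prop :=
  (forall x, linear (mul x)) /\ (forall y, linear (fun x => mul x y)).

Definition Ann_l (V : zmodType) (mul : V -> V -> V) (a : V) : Prop :=
  forall x, mul a x = 0.
Definition Ann_r (V : zmodType) (mul : V -> V -> V) (a : V) : Prop :=
  forall x, mul x a = 0.
Definition in_A0 (V : zmodType) (mul : V -> V -> V) (a : V) : Prop :=
  Ann_l mul a /\ Ann_r mul a.

(* Weak multipliers and multipliers of an algebra (B, m); T need not be linear. *)
Definition is_wmult (B : Type) (m : B -> B -> B) (T : B -> B) : Prop :=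
  forall x y, m x (T y) = m (T x) y.
Definition is_mult (B : Type) (m : B -> B -> B) (T : B -> B) : Prop :=
  forall x y, m x (T y) = T (m x y) /\ T (m x y) = m (T x) y.

(* Main.v *)
Require Import Defs.
From HB Require Import structures.
From mathcomp Require Import all_boot all_order all_algebra.
Import GRing.Theory.
Local Open Scope ring_scope.
From Stdlib Require Import FunctionalExtensionality.



Lemma linP0 {K : fieldType} {U X : lmodType K} {f : U -> X} : linear f -> f 0 = 0.
Proof.
move=> hf; have := hf 1 0 0; rewrite !scale1r addr0 => H.
by apply: (addrI (f 0)); rewrite addr0 -{1}H.
Qed.
Lemma linPD {K : fieldType} {U X : lmodType K} {f : U -> X} : linear f ->
  forall u v, f (u + v) = f u + f v.
Proof. by move=> hf u v; have := hf 1 u v; rewrite !scale1r. Qed.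
Lemma linPZ {K : fieldType} {U X : lmodType K} {f : U -> X} : linear f ->
  forall a u, f (a *: u) = a *: f u.
Proof. by move=> hf a u; have := hf a u 0; rewrite addr0 (linP0 hf) addr0. Qed.
Lemma linPN {K : fieldType} {U X : lmodType K} {f : U -> X} : linear f ->
  forall u, f (- u) = - f u.
Proof. by move=> hf u; rewrite -scaleN1r (linPZ hf) scaleN1r. Qed.
Lemma linPB {K : fieldType} {U X : lmodType K} {f : U -> X} : linear f ->
  forall u v, f (u - v) = f u - f v.
Proof. by move=> hf u v; rewrite (linPD hf) (linPN hf). Qed.

Theorem theorem3p1 (K : fieldType) (V : lmodType K) (mul : V -> V -> V)
  (Hmul : bilinear_mul mul) (A1 : {pred V})
  (HA1 : submod_closed A1)
  (Hspan : forall x : V, exists a b : V, a \in A1 /\ in_A0 mul b /\ x = a + b)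
  (Hcap : forall a : V, a \in A1 -> in_A0 mul a -> a = 0) :
  (* (i) *)
  (forall T T1 T0 : V -> V,
     (forall x, T x = T1 x + T0 x) -> (forall x, T1 x \in A1) ->
     (forall x, in_A0 mul (T0 x)) ->
     (is_wmult mul T <-> is_wmult mul T1) /\
     (is_wmult mul T -> linear T1 /\ (forall x, in_A0 mul x -> T1 x = 0)))
  /\
  (* (ii) *)
  (forall T T1 T0 : V -> V,
     (forall x, T x = T1 x + T0 x) -> (forall x, T1 x \in A1) ->
     (forall x, in_A0 mul (T0 x)) ->
     (is_mult mul T1 -> (forall x y, T0 (mul x y) = 0) -> is_mult mul T) /\
     ((forall x y, x \in A1 -> y \in A1 -> mul x y \in A1) ->
        is_mult mul T -> is_mult mul T1 /\ (forall x y, T0 (mul x y) = 0)))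
  /\
  (* (iii) : W is the subspace A1 as a type (with inclusion mu = val),
     mulW is the multiplication of the subalgebra A1, pi the projection
     along A0, and Phi R = val \o R \o pi. *)
  (forall (W : subLmodType A1) (mulW : W -> W -> W) (pi : V -> W),
     (forall u v : W, val (mulW u v) = mul (val u) (val v)) ->
     (forall x, in_A0 mul (x - val (pi x))) ->
     let Phi := fun (R : W -> W) (x : V) => val (R (pi x)) in
     (* Phi : M(A1) -> M_1(A) is an algebra isomorphism *)
     ((forall R, is_mult mulW R ->
         is_mult mul (Phi R) /\ (forall x, Phi R x \in A1)) /\
      (forall T, is_mult mul T -> (forall x, T x \in A1) ->
         exists R, is_mult mulW R /\ Phi R = T) /\
      (forall R S, is_mult mulW R -> is_mult mulW S -> Phi R = Phi S -> R = S) /\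
      (forall R S, is_mult mulW R -> is_mult mulW S ->
         Phi (fun w => R w + S w) = (fun x => Phi R x + Phi S x)) /\
      (forall (a : K) R, is_mult mulW R ->
         Phi (fun w => a *: R w) = (fun x => a *: Phi R x)) /\
      (forall R S, is_mult mulW R -> is_mult mulW S ->
         Phi (fun w => R (S w)) = (fun x => Phi R (Phi S x))))
     /\
     (* Phi : M'(A1) -> M'_1(A) is a linear bijection preserving the
        Jordan product S o U = SU + US *)
     ((forall R, is_wmult mulW R ->
         is_wmult mul (Phi R) /\ (forall x, Phi R x \in A1)) /\
      (forall T, is_wmult mul T -> (forall x, T x \in A1) ->
         exists R, is_wmult mulW R /\ Phi R = T) /\
      (forall R S, is_wmult mulW R -> is_wmult mulW S -> Phi R = Phi S -> R = S) /\
      (forall R S, is_wmult mulW R -> is_wmult mulW S ->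
         Phi (fun w => R w + S w) = (fun x => Phi R x + Phi S x)) /\
      (forall (a : K) R, is_wmult mulW R ->
         Phi (fun w => a *: R w) = (fun x => a *: Phi R x)) /\
      (forall R S, is_wmult mulW R -> is_wmult mulW S ->
         Phi (fun w => R (S w) + S (R w)) =
         (fun x => Phi R (Phi S x) + Phi S (Phi R x))))).
Proof.
have [Hl2 Hl1] := Hmul.
have mD2 x u v : mul x (u + v) = mul x u + mul x v by exact: linPD.
have mD1 u v y : mul (u + v) y = mul u y + mul v y by exact: (linPD (Hl1 y)).
have mB2 x u v : mul x (u - v) = mul x u - mul x v by exact: linPB.
have mB1 u v y : mul (u - v) y = mul u y - mul v y by exact: (linPB (Hl1 y)).
have mZ2 x a u : mul x (a *: u) = a *: mul x u by exact: linPZ.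
have mZ1 a u y : mul (a *: u) y = a *: mul u y by exact: (linPZ (Hl1 y)).
have [HA0 Hlin] := HA1.
have A1B a c : a \in A1 -> c \in A1 -> a - c \in A1.
  by move=> Ha Hc; rewrite addrC -scaleN1r; apply: Hlin.
have A0zero : in_A0 mul 0.
  by split=> x; [exact: (linP0 (Hl1 x)) | exact: linP0].
have A0N b : in_A0 mul b -> in_A0 mul (- b).
  move=> [Hb1 Hb2]; split=> x.
    by rewrite -(add0r (- b)) mB1 Hb1 subr0; exact: (linP0 (Hl1 x)).
  by rewrite -(add0r (- b)) mB2 Hb2 subr0; exact: linP0.
have partI : forall T T1 T0 : V -> V,
     (forall x, T x = T1 x + T0 x) -> (forall x, T1 x \in A1) ->
     (forall x, in_A0 mul (T0 x)) ->
     (is_wmult mul T <-> is_wmult mul T1) /\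
     (is_wmult mul T -> linear T1 /\ (forall x, in_A0 mul x -> T1 x = 0)).
  move=> T T1 T0 HT H1 H0.
  have e1 x y : mul x (T y) = mul x (T1 y) by rewrite HT mD2 (proj2 (H0 y) x) addr0.
  have e2 x y : mul (T x) y = mul (T1 x) y by rewrite HT mD1 (proj1 (H0 x) y) addr0.
  split.
    by split=> H x y; [rewrite -e1 -e2 | rewrite e1 e2].
  move=> HW.
  have W1 x y : mul x (T1 y) = mul (T1 x) y by rewrite -e1 -e2.
  split.
    move=> a u v /=.
    apply/eqP; rewrite -subr_eq0; apply/eqP; apply: Hcap.
      by apply: A1B; [exact: H1 | apply: Hlin; exact: H1].
    split=> x.
      by rewrite mB1 mD1 mZ1 -!W1 mD1 mZ1 subrr.
    by rewrite mB2 mD2 mZ2 !W1 mD2 mZ2 subrr.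
  move=> x Hx; apply: Hcap; first exact: H1.
  split=> y; first by rewrite -W1; exact: (proj1 Hx).
  by rewrite W1; exact: (proj2 Hx).
split; first exact: partI.
split.
  move=> T T1 T0 HT H1 H0; split.
    move=> HM HT0 x y.
    rewrite !HT HT0 addr0 mD2 mD1 (proj2 (H0 y)) (proj1 (H0 x)) !addr0.
    exact: HM.
  move=> Hsub HM.
  have HT0 x y : T0 (mul x y) = 0.
    have Hin : T (mul x y) \in A1.
      rewrite -(proj1 (HM x y)) HT mD2 (proj2 (H0 y)) addr0.
      have [a [b [Ha [Hb ->]]]] := Hspan x.
      by rewrite mD1 (proj1 Hb) addr0; apply: Hsub => //; exact: H1.
    apply: Hcap; last exact: H0.
    have -> : T0 (mul x y) = T (mul x y) - T1 (mul x y)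
      by rewrite HT addrAC subrr add0r.
    by apply: A1B => //; exact: H1.
  split=> // x y; have := HM x y.
  by rewrite !HT HT0 addr0 mD2 mD1 (proj2 (H0 y)) (proj1 (H0 x)) !addr0.
move=> W mulW pi HmW Hpi Phi.
have valA1 (w : W) : val w \in A1 by exact: valP.
have piA1 z : z \in A1 -> val (pi z) = z.
  move=> Hz; apply/eqP; rewrite -subr_eq0; apply/eqP; apply: Hcap.
    by apply: A1B.
  by rewrite -opprB; apply: A0N.
have piV (w : W) : pi (val w) = w by apply: val_inj; apply: piA1.
have mulpi x y : mul x y = mul (val (pi x)) (val (pi y)).
  transitivity (mul (val (pi x) + (x - val (pi x))) (val (pi y) + (y - val (pi y)))).
    by rewrite (addrC (val (pi x))) (addrC (val (pi y))) !subrK.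
  by rewrite mD1 (proj1 (Hpi x)) addr0 mD2 (proj2 (Hpi y)) addr0.
have mulpi' x y : pi (mul x y) = mulW (pi x) (pi y) by rewrite (mulpi x y) -HmW piV.
have Tprop : forall T, is_wmult mul T -> (forall x, T x \in A1) ->
    (forall x, T (val (pi x)) = T x).
  move=> T HT H1 x.
  have [_ /(_ HT) [Tlin T0]] := partI T T (fun _ => 0) (fun x => esym (addr0 _)) H1 (fun _ => A0zero).
  rewrite [in RHS](_ : x = (x - val (pi x)) + val (pi x)); last by rewrite subrK.
  by rewrite (linPD Tlin) (T0 _ (Hpi _)) add0r.
split.
  split.
    move=> R HR; split; last by move=> x; exact: valA1.
    move=> x y; split.
      rewrite /Phi mulpi' -(proj1 (HR (pi x) (pi y))) HmW.
      by rewrite [LHS]mulpi piV.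
    by rewrite /Phi mulpi' (proj2 (HR (pi x) (pi y))) HmW [RHS]mulpi piV.
  split.
    move=> T HT H1.
    have HW : is_wmult mul T by move=> x y; rewrite (proj1 (HT x y)) (proj2 (HT x y)).
    have piT z : val (pi (T z)) = T z by apply: piA1.
    exists (fun w => pi (T (val w))); split.
      move=> u v; have [h1 h2] := HT (val u) (val v).
      by split; apply: val_inj; rewrite /= !HmW !piT.
    apply: functional_extensionality => x.
    by rewrite /Phi piT (Tprop T HW H1).
  split.
    move=> R S _ _ HE; apply: functional_extensionality => w.
    by move: (congr1 (fun f => f (val w)) HE); rewrite /Phi /= piV => /val_inj.
  split.
    by move=> R S _ _; apply: functional_extensionality => x; rewrite /Phi raddfD.
  split.
    by move=> a R _; apply: functional_extensionality => x; rewrite /Phi linearZ.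
  by move=> R S _ _; apply: functional_extensionality => x; rewrite /Phi piV.
split.
  move=> R HR; split; last by move=> x; exact: valA1.
  move=> x y; rewrite /Phi mulpi piV -HmW HR HmW.
  by rewrite [RHS]mulpi piV.
split.
  move=> T HT H1.
  have piT z : val (pi (T z)) = T z by apply: piA1.
  exists (fun w => pi (T (val w))); split.
    move=> u v; apply: val_inj; rewrite /= !HmW !piT; exact: HT.
  apply: functional_extensionality => x.
  by rewrite /Phi piT (Tprop T HT H1).
split.
  move=> R S _ _ HE; apply: functional_extensionality => w.
  by move: (congr1 (fun f => f (val w)) HE); rewrite /Phi /= piV => /val_inj.
split.
  by move=> R S _ _; apply: functional_extensionality => x; rewrite /Phi raddfD.
split.
  by move=> a R _; apply: functional_extensionality => x; rewrite /Phi linearZ.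
by move=> R S _ _; apply: functional_extensionality => x; rewrite /Phi raddfD !piV.
Qed.
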